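(* Let $R$ be an associative ring with identity and involution $*$, and let $a\in R^{\#}\cap R^{\dagger}$. Then $a\in R^{SEP}$ if and only if there exists $x\in\rho_a=\{a,\ a^{\#},\ a^{\dagger},\ a^*,\ (a^{\dagger})^*,\ (a^{\#})^*,\ (a^{\#})^{\dagger},\ (a^{\dagger})^{\#}\}$ such that $a(a^{\#})^*a^{\dagger}$ and $a^{\dagger}a^2$ are left $x$-equivalent, i.e. $x\,a(a^{\#})^*a^{\dagger}=x\,a^{\dagger}a^2$.
   Context: An involution on $R$ is a map $x\mapsto x^*$ with $(x^* )^*=x$, $(x+y)^*=x^*+y^*$, $(xy)^*=y^*x^*$. An element $a$ is Moore–Penrose invertible if there is $b$ with $aba=a$, $bab=b$, $(ab)^*=ab$, $(ba)^*=ba$; such $b$ is unique, denoted $a^{\dagger}$, and $R^{\dagger}$ is the set of such $a$. An element $a$ is group invertible if there is $b$ with $aba=a$, $bab=b$, $ab=ba$; such $b$ is unique, denoted $a^{\#}$, and $R^{\#}$ is the set of such $a$. For $a\in R^{\#}\cap R^{\dagger}$, the elements $a^{\#}$ is Moore–Penrose invertible and $a^{\dagger}$ is group invertible, so $(a^{\#})^{\dagger}$ and $(a^{\dagger})^{\#}$ exist. For $a\in R^{\#}\cap R^{\dagger}$, $a$ is SEP if $a^*=a^{\dagger}=a^{\#}$; $R^{SEP}$ denotes the set of SEP elements. For $x,b,c\in R$, $b$ and $c$ are left $x$-equivalent if $xb=xc$. *)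

(* Defs.v *)
From mathcomp Require Import all_boot all_algebra.
Set Implicit Arguments. Unset Strict Implicit. Unset Printing Implicit Defensive.
Import GRing.Theory.
Local Open Scope ring_scope.

Definition is_involution (R : pzRingType) (s : R -> R) : Prop :=
  [/\ forall x, s (s x) = x,
      forall x y, s (x + y) = s x + s y &
      forall x y, s (x * y) = s y * s x].

Definition is_MP_inverse (R : pzRingType) (s : R -> R) (a b : R) : Prop :=
  [/\ a * b * a = a, b * a * b = b, s (a * b) = a * b & s (b * a) = b * a].

Definition is_group_inverse (R : pzRingType) (a b : R) : Prop :=
  [/\ a * b * a = a, b * a * b = b & a * b = b * a].

Definition is_SEP (R : pzRingType) (s : R -> R) (a ad ag : R) : Prop :=
  s a = ad /\ ad = ag.

Definition left_equiv (R : pzRingType) (x b c : R) : Prop := x * b = x * c.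

(* Main.v *)
Require Import Defs.
From mathcomp Require Import all_boot all_algebra.
Local Open Scope ring_scope.
Import GRing.Theory.

Theorem theorem5p2 (R : pzRingType) (s : R -> R) (a ad ag adg gad : R)
  (Hs : is_involution s)
  (Had : is_MP_inverse s a ad)        (* ad = a^dagger *)
  (Hag : is_group_inverse a ag)       (* ag = a^# *)
  (Hadg : is_MP_inverse s ag adg)     (* adg = (a^#)^dagger *)
  (Hgad : is_group_inverse ad gad) :  (* gad = (a^dagger)^# *)
  is_SEP s a ad ag <->
  exists2 x, x \in [:: a; ag; ad; s a; s ad; s ag; adg; gad] &
    left_equiv x (a * s ag * ad) (ad * a ^+ 2).
Proof.
case: Hs => ss sD sM.
case: Had => h1 h2 h3 h4.
case: Hag => g1 g2 g3.
have r1 y : a * (ad * (a * y)) = a * y by rewrite !mulrA h1.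
have r2 y : ad * (a * (ad * y)) = ad * y by rewrite !mulrA h2.
have r3 y : a * (ag * (a * y)) = a * y by rewrite !mulrA g1.
have r4 y : ag * (a * (ag * y)) = ag * y by rewrite !mulrA g2.
have cm y : a * (ag * y) = ag * (a * y) by rewrite !mulrA g3.
have EP : a * (a * (a * ad)) = a * a -> [/\ ad = ag, ad * a = a * ad & ag * a = a * ad].
  move=> H.
  have hgg y : ag * (ag * (a * (a * y))) = ag * (a * y).
    by rewrite -(cm (a * y)) r4.
  have ep : ag * a = a * ad.
    have := hgg 1; rewrite !mulr1 => <-.
    by rewrite -H hgg -cm r3.
  have qe : ad * a * (ag * a) = ad * a by rewrite -mulrA (mulrA a ag a) g1.
  have eq' : ag * a * (ad * a) = ag * a by rewrite -mulrA (mulrA a ad a) h1.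
  have se : s (ag * a) = ag * a by rewrite ep h3.
  have qq : ad * a = ag * a by rewrite -h4 -qe sM se h4 eq'.
  have adg' : ad = ag by rewrite -h2 qq -mulrA -ep -g3 mulrA g2.
  by split => //; rewrite qq.
have SEP : ad * a = a * ad -> ad * a * s ad * ad = ad * a -> s a = ad.
  move=> Hqp H.
  have t : ad * a * s ad = s ad.
    by rewrite Hqp -{1}h3 -sM mulrA h2.
  rewrite t in H.
  have sa : s a = s a * (a * ad) by rewrite -{1}h1 sM h3.
  by rewrite sa -Hqp -H mulrA -sM h4 h2.
have h1' : a * (ad * a) = a by rewrite mulrA h1.
have r2' : ad * (a * ad) = ad by rewrite mulrA h2.
have CA : a * (a * s ag * ad) = a * (ad * a ^+ 2) -> is_SEP s a ad ag.
  move=> H.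
  have H' : a * (a * (s ag * ad)) = a * a by rewrite (mulrA a (s ag)) H expr2 r1.
  have H2 : a * (a * (a * ad)) = a * a.
    by rewrite (mulrA a a) -{1}H' -!mulrA r2' H'.
  have [adag qp ep] := EP H2.
  have cq z : ad * (a * z) = a * (ad * z) by rewrite !mulrA qp.
  have k y : ad * (ad * (a * (a * y))) = ad * (a * y) by rewrite (cq (a * y)) r1.
  split; last by [].
  apply: SEP => //.
  rewrite -adag in H'.
  have := congr1 (fun t => ad * (ad * t)) H'.
  rewrite /= k -(mulr1 (a * a)) -mulrA k mulr1 => E.
  by rewrite -{2}E !mulrA.
have CB : a * ad * (a * s ag * ad) = a * ad * (ad * a ^+ 2) -> is_SEP s a ad ag.
  move=> H.
  have HB : a * (s ag * ad) = a * (ad * (ad * (a * a))).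
    by move: H; rewrite expr2 -!mulrA r1.
  have HB2 : a * (ad * (ad * (a * (a * (a * ad))))) = a * (ad * (ad * (a * a))).
    move: (congr1 (fun t => t * (a * ad)) HB); rewrite /= -!mulrA r2' => E.
    by rewrite -E.
  have pe : a * ad * (ag * a) = ag * a by rewrite -g3 -mulrA r1.
  have qe : ad * a * (ag * a) = ad * a by rewrite -mulrA (mulrA a ag a) g1.
  have se1 : s (ag * a) * (a * ad) = s (ag * a) by rewrite -{1}h3 -sM pe.
  have se2 : s (ag * a) * (ad * a) = ad * a by rewrite -{1}h4 -sM qe h4.
  have se1' y : s (ag * a) * (a * (ad * y)) = s (ag * a) * y.
    by rewrite (mulrA a ad) mulrA se1.
  have se2' y : s (ag * a) * (ad * (a * y)) = ad * (a * y).
    by rewrite (mulrA ad a) mulrA se2.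
  have yk z : a * (s (ag * a) * (a * (ad * (ad * (a * z))))) = a * z.
    by rewrite se1' se2' r1.
  have H2 : a * (a * (a * ad)) = a * a.
    by move: (congr1 (fun t => a * (s (ag * a) * t)) HB2); rewrite /= !yk.
  have [adag qp ep] := EP H2.
  have cq z : ad * (a * z) = a * (ad * z) by rewrite !mulrA qp.
  split; last by [].
  apply: SEP => //.
  rewrite -adag cq !h1' in HB.
  by rewrite -{2}HB !mulrA.
have C3 : ad * (a * s ag * ad) = ad * (ad * a ^+ 2) -> is_SEP s a ad ag.
  move=> H; apply: CB.
  by move: (congr1 (fun t => a * t) H); rewrite /= !(mulrA a ad).
split.
  case=> sa adag.
  have sag : s ag = a by rewrite -adag -sa ss.
  have qp : ad * a = a * ad by rewrite adag g3.
  exists a; first by rewrite inE eqxx.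
  rewrite /left_equiv sag expr2 r1 -!mulrA -qp.
  by rewrite (mulrA a ad a) h1.
case=> x Hx; rewrite /left_equiv => H.
move: Hx; rewrite !inE.
case/orP => [/eqP E|]; first by apply: CA; rewrite E in H.
case/orP => [/eqP E|].
  apply: CA; rewrite E in H.
  have aag : a * a * ag = a by rewrite -mulrA g3 mulrA g1.
  by move: (congr1 (fun t => a * a * t) H); rewrite /= !(mulrA (a * a) ag) aag.
case/orP => [/eqP E|]; first by apply: C3; rewrite E in H.
case/orP => [/eqP E|].
  apply: CB; rewrite E in H.
  by move: (congr1 (fun t => s ad * t) H); rewrite /= !(mulrA (s ad) (s a)) -sM h3.
case/orP => [/eqP E|].
  apply: CA; rewrite E in H.
  move: (congr1 (fun t => a * (s a * t)) H); rewrite /= !(mulrA (s a) (s ad)) -sM h4.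
  by rewrite !(mulrA a (ad * a)) h1'.
case/orP => [/eqP E|].
  apply: CB; rewrite E in H.
  have ep' : ag * a * (a * ad) = a * ad by rewrite -g3 mulrA g1.
  have pse : a * ad * s (ag * a) = a * ad by rewrite -{1}h3 -sM ep' h3.
  move: (congr1 (fun t => a * ad * (s a * t)) H); rewrite /= !(mulrA (s a) (s ag)) -sM.
  by rewrite !(mulrA (a * ad) (s (ag * a))) pse.
case/orP => [/eqP E|].
  apply: CB; rewrite E in H.
  case: Hadg => k1 k2 k3 k4.
  have aga : ag * a * a = a by rewrite -g3 g1.
  have bcp : ag * adg * (a * ad) = a * ad.
    by rewrite -{1}aga !mulrA k1 aga.
  have agg : a * (ag * ag) = ag by rewrite mulrA g3 g2.
  have pag : a * ad * ag = ag by rewrite -{1}agg mulrA h1 agg.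
  have pbc : a * ad * (ag * adg) = ag * adg by rewrite mulrA pag.
  have bp : ag * adg = a * ad by rewrite -k3 -pbc sM k3 h3 bcp.
  by move: (congr1 (fun t => ag * t) H); rewrite /= !(mulrA ag adg) bp.
move/eqP => E.
apply: C3; rewrite E in H.
case: Hgad => d1 d2 d3.
have ddg : ad * ad * gad = ad by rewrite -mulrA d3 mulrA d1.
by move: (congr1 (fun t => ad * ad * t) H); rewrite /= !(mulrA (ad * ad) gad) ddg.
Qed.
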